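(* Let $G=(V,E)$ be a 3-vertex-connected graph with minimum degree $\delta$. Then Broadcast on $G$ is not solvable with $k\le \delta-2$ ignorant agents (the adversary has a winning strategy).
   Context: A graph is 3-vertex-connected if it has more than 3 vertices and remains connected after deleting any 2 vertices. Broadcast model: a connected base graph $G=(V,E)$ with $n$ nodes. There is one source agent holding a message $\mathcal M$ and $k\ge1$ ignorant agents (agents not holding $\mathcal M$); initially all agents occupy pairwise distinct nodes, the initial placement being chosen by the adversary. Time proceeds in synchronous rounds; in each round: (1) the adversary removes a (possibly empty) set $E'\subseteq E$ of edges such that $(V,E\setminus E')$ is connected; (2) each agent (agents have unique IDs, local memory, and see the entire current graph, the positions of all agents and which agents hold $\mathcal M$) chooses either to stay or to traverse an edge of $E\setminus E'$ incident to its current node; (3) agents move. Whenever an ignorant agent is at the same node as an agent holding $\mathcal M$, it receives $\mathcal M$ and becomes a source agent. The adversary is adaptive and knows the agents' strategy. Broadcast is solvable on $G$ with $k$ ignorant agents if the agents have a strategy such that, for every initial placement and every adversary behaviour, after finitely many rounds all agents hold $\mathcal M$; otherwise the adversary is said to have a winning strategy. *)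

(* Defs.v *)
From mathcomp Require Import all_boot.
Set Implicit Arguments. Unset Strict Implicit. Unset Printing Implicit Defensive.

(* A finite simple graph is a symmetric irreflexive relation G on a finType V. *)

Definition remaining (V : finType) (G : rel V) (Er : {set V * V}) : rel V :=
  fun x y => [&& G x y, (x, y) \notin Er & (y, x) \notin Er].

Definition connected_rel (V : finType) (r : rel V) : Prop :=
  forall x y : V, connect r x y.

Definition legal_removal (V : finType) (G : rel V) (Er : {set V * V}) : Prop :=
  (forall p, p \in Er -> G p.1 p.2) /\ connected_rel (remaining G Er).

Definition three_vertex_connected (V : finType) (G : rel V) : Prop :=
  3 < #|V| /\
  forall u v : V, u != v ->
    forall x y : V, x \notin [set u; v] -> y \notin [set u; v] ->
      connect [rel a b | [&& G a b, a \notin [set u; v] & b \notin [set u; v]]] x y.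

Definition degree (V : finType) (G : rel V) (v : V) : nat := #|[set w | G v w]|.

Definition is_min_degree (V : finType) (G : rel V) (delta : nat) : Prop :=
  (forall v, delta <= degree G v) /\ exists v, degree G v = delta.

(* Agents are 'I_k.+1; agent ord0 is the source agent, the other k are ignorant.
   A configuration = (positions of agents, set of agents holding M). *)
Definition config (V : finType) (k : nat) : Type :=
  ({ffun 'I_k.+1 -> V} * {set 'I_k.+1})%type.

(* History of completed rounds: configuration at the start of the round and
   the set of edges removed by the adversary in that round. *)
Definition history (V : finType) (k : nat) : Type :=
  seq (config V k * {set V * V}).

(* Agents' (joint, deterministic, full-information, full-memory) strategy:
   given the past, the current configuration and the current graph (via the
   removed set), each agent chooses a target node (stay = its own node).
   A target that is neither the current node nor a neighbour in the current
   graph is treated as "stay". *)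
Definition agent_strategy (V : finType) (k : nat) : Type :=
  history V k -> config V k -> {set V * V} -> 'I_k.+1 -> V.

Definition adversary (V : finType) (k : nat) : Type :=
  history V k -> config V k -> {set V * V}.

Definition step (V : finType) (G : rel V) (k : nat) (Er : {set V * V})
    (c : config V k) (target : 'I_k.+1 -> V) : config V k :=
  let pos := c.1 in
  let pos' := [ffun a => if (target a == pos a) || remaining G Er (pos a) (target a)
                         then target a else pos a] in
  (pos', [set a | [exists b, (b \in c.2) && (pos' b == pos' a)]]).

Fixpoint run (V : finType) (G : rel V) (k : nat) (sigma : agent_strategy V k)
    (adv : adversary V k) (p0 : {ffun 'I_k.+1 -> V}) (t : nat)
    : history V k * config V k :=
  match t with
  | 0 => ([::], (p0, [set ord0]))
  | t'.+1 =>
      let hc := run G sigma adv p0 t' in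
      let h := hc.1 in let c := hc.2 in
      let Er := adv h c in
      (rcons h (c, Er), step G Er c (sigma h c Er))
  end.

Definition broadcast_solvable (V : finType) (G : rel V) (k : nat) : Prop :=
  exists sigma : agent_strategy V k,
    forall p0 : {ffun 'I_k.+1 -> V}, injective p0 ->
    forall adv : adversary V k,
      (forall h c, legal_removal G (adv h c)) ->
      exists t, (run G sigma adv p0 t).2.2 = [set: 'I_k.+1].

(* Main.v *)
Require Import Defs.
From mathcomp Require Import all_boot.
From mathcomp Require Import zify.

Section Adv.
Variables (V : finType) (G : rel V) (k : nat).
Hypothesis Gsym : symmetric G.
Hypothesis Girr : irreflexive G.
Hypothesis H3 : three_vertex_connected G.
Hypothesis Hdeg : forall v, k.+2 <= degree G v.

Definition occ (c : config V k) : {set V} := [set c.1 a | a in [set~ ord0]].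

Definition pickw (c : config V k) : V :=
  odflt (c.1 ord0) [pick w | G (c.1 ord0) w && (w \notin occ c)].

Definition pickx (c : config V k) : V :=
  odflt (pickw c) [pick x | [&& G (pickw c) x, x != c.1 ord0 & x \notin occ c]].

Definition ErOf (c : config V k) : {set V * V} :=
  [set e | [&& e.1 == c.1 ord0, e.2 != pickw c & G e.1 e.2]] :|:
  [set e | [&& e.1 == pickw c, e.2 != c.1 ord0, e.2 != pickx c & G e.1 e.2]].

Lemma occ_card (c : config V k) : #|occ c| <= k.
Proof.
apply: leq_trans (leq_imset_card _ _) _.
by rewrite cardsC1 card_ord.
Qed.

Lemma pickw_spec (c : config V k) : G (c.1 ord0) (pickw c) && (pickw c \notin occ c).
Proof.
rewrite /pickw; case: pickP => [w Hw | H] //=.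
exfalso.
have sub : [set y | G (c.1 ord0) y] \subset occ c.
  apply/subsetP => y; rewrite inE => Gy.
  have := H y; rewrite Gy /=; by case: (y \in occ c).
have := subset_leq_card sub; have := occ_card c; have := Hdeg (c.1 ord0).
rewrite /degree; lia.
Qed.

Lemma pickx_spec (c : config V k) :
  [&& G (pickw c) (pickx c), pickx c != c.1 ord0 & pickx c \notin occ c].
Proof.
rewrite /pickx; case: pickP => [x Hx | H] //=.
exfalso.
have sub : [set y | G (pickw c) y] \subset (c.1 ord0) |: occ c.
  apply/subsetP => y; rewrite inE => Gy.
  have := H y; rewrite Gy /= !inE.
  by case: (y == c.1 ord0); case: (y \in occ c).
have := subset_leq_card sub; have := occ_card c; have := Hdeg (pickw c).
rewrite cardsU1 /degree; case: (_ \notin _) => /=; lia.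
Qed.

Lemma legal (c : config V k) : legal_removal G (ErOf c).
Proof.
split.
  by move=> p; rewrite !inE => /orP[/and3P[] | /and4P[]].
have /andP[Gsw _] := pickw_spec c.
have /and3P[Gwx xs _] := pickx_spec c.
set s := c.1 ord0 in Gsw Gwx xs *. set w := pickw c in Gsw Gwx xs *. set x := pickx c in Gsw Gwx xs *.
have sw : s != w by apply/eqP => E; rewrite E Girr in Gsw.
have xw : x != w by apply/eqP => E; rewrite E Girr in Gwx.
set r := remaining G (ErOf c).
have rsym : symmetric r.
  move=> a b; rewrite /r /remaining Gsym.
  by case: (G b a); case: ((a, b) \in _); case: ((b, a) \in _).
have nE : forall a b, a != s -> a != w -> (a, b) \notin ErOf c.
  move=> a b As Aw; rewrite !inE /= -/s -/w -/x.
  by rewrite (negbTE As) (negbTE Aw).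
have cx : forall z, connect r x z.
  move=> z.
  have xwE : connect r x w.
    apply: connect1; rewrite /r /remaining Gsym Gwx nE //=.
    rewrite !inE /= -/s -/w -/x (eq_sym w s) (negbTE sw) /=.
    by apply/negP => /andP[_ /and3P[_ /eqP []]].
  case: (eqVneq z w) => [-> // | zw].
  case: (eqVneq z s) => [-> | zs].
    apply: connect_trans xwE (connect1 _).
    rewrite /r /remaining Gsym Gsw /= !inE /= -/s -/w -/x eqxx /=.
    by rewrite (eq_sym w s) (negbTE sw) /= !eqxx /= ?andbF.
  have [_ H3c] := H3.
  have := H3c s w sw x z.
  rewrite !inE (negbTE xs) (negbTE xw) (negbTE zs) (negbTE zw) => /(_ isT isT).
  apply: connect_sub => a b /=; rewrite !inE.
  case/and3P=> Gab /norP[As Aw] /norP[Bs Bw].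
  by apply: connect1; rewrite /r /remaining Gab !nE.
move=> y z.
apply: connect_trans (cx z).
by rewrite (sym_connect_sym rsym).
Qed.

Definition inv (c : config V k) : Prop :=
  c.2 = [set ord0] /\ forall a, a != ord0 -> c.1 a != c.1 ord0.

Lemma step_inv (c : config V k) T : inv c -> inv (step G (ErOf c) c T).
Proof.
move=> [H2 H1].
have /andP[Gsw wocc] := pickw_spec c.
have /and3P[Gwx xs xocc] := pickx_spec c.
set s := c.1 ord0 in Gsw Gwx xs wocc xocc H1 *.
set w := pickw c in Gsw Gwx xs wocc xocc *.
set x := pickx c in Gsw Gwx xs wocc xocc *.
rewrite /step /=.
set pos' := [ffun a => _].
have F0 : (pos' ord0 == s) || (pos' ord0 == w).
  rewrite /pos' ffunE -/s.
  case: ifP => [/orP[/eqP -> | ] | _]; rewrite ?eqxx //.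
  rewrite /remaining => /and3P[Gst nin _].
  apply/orP; right; apply/negPn/negP => tw; move: nin.
  by rewrite !inE /= eqxx tw Gst.
have F1 : forall a, a != ord0 -> (pos' a != s) && (pos' a != w).
  move=> a a0.
  have pocc : c.1 a \in occ c by apply/imsetP; exists a; rewrite // !inE.
  have pw : c.1 a != w by apply/eqP => E; rewrite -E pocc in wocc.
  have px : c.1 a != x by apply/eqP => E; rewrite -E pocc in xocc.
  have ps : c.1 a != s := H1 a a0.
  rewrite /pos' ffunE.
  case: ifP => [/orP[/eqP -> | ] | _]; rewrite ?ps ?pw //.
  rewrite /remaining => /and3P[Gpt n1 n2].
  apply/andP; split; apply/eqP => E; rewrite E in Gpt n1 n2.
    by move: n2; rewrite !inE /= eqxx pw Gsym Gpt.
  by move: n2; rewrite !inE /= eqxx ps px Gsym Gpt /= orbT.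
split.
  apply/setP => a; rewrite !inE; apply/existsP/idP.
    move=> [b /andP[]]; rewrite H2 inE => /eqP -> E.
    apply/negPn/negP => a0; have := F1 a a0; move: F0.
    by rewrite -(eqP E) => /orP[] /eqP ->; rewrite eqxx // andbF.
  by move/eqP ->; exists ord0; rewrite H2 !inE !eqxx.
move=> a a0 /=; have := F1 a a0.
by move: F0 => /orP[] /eqP ->; case/andP.
Qed.

End Adv.

Theorem theorem6 (V : finType) (G : rel V) (k delta : nat) :
  symmetric G -> irreflexive G ->
  three_vertex_connected G ->
  is_min_degree G delta ->
  0 < k -> k <= delta - 2 ->
  ~ broadcast_solvable G k.
Proof.
move=> Gsym Girr H3 [Hmin _] kpos kle [sigma Hsig].
have Hdeg : forall v, k.+2 <= degree G v by move=> v; have := Hmin v; lia.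
have card : k.+1 <= #|V|.
  have [v _] : exists v : V, v \in V.
    apply/card_gt0P; case: H3 => H _; apply: leq_trans H; done.
  have := Hdeg v; have := max_card [set w | G v w]; rewrite /degree; lia.
pose p0 : {ffun 'I_k.+1 -> V} := [ffun a => enum_val (widen_ord card a)].
have p0inj : injective p0.
  move=> a b; rewrite !ffunE => /enum_val_inj /(congr1 val) /= E.
  by apply: val_inj.
pose adv : adversary V k := fun h c => @ErOf V G k c.
have [t Ht] := Hsig p0 p0inj adv (fun h c => @legal V G k Gsym Girr H3 Hdeg c).
have I : forall t, @inv V k (run G sigma adv p0 t).2.
  elim=> [|t' IH] /=.
    split => // a a0; apply/eqP => E; move: a0; by rewrite (p0inj _ _ E) eqxx.
  exact: (@step_inv V G k Gsym).
have [I2 _] := I t.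
have : (Ordinal (kpos : 1 < k.+1)) \in [set ord0] by rewrite -I2 Ht inE.
by rewrite inE.
Qed.
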